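(* Let $H<G$ be groups and let $(G_k)_{k\in\mathbb N}$, $(H_k)_{k\in\mathbb N}$ be increasing sequences of subgroups of $G$ with $\bigcup_k G_k=G$, $\bigcup_k H_k=H$ and $H_k<G_k$. Let $K$ be a group. If $H_k<G_k$ is relatively sofic over $K$ for every $k$, then $H<G$ is relatively sofic over $K$.
   Context: $H<G$ is relatively sofic over a group $K$ if there exist a sequence of inclusions of groups $(H'_i<G'_i)_{i\in\mathbb N}$ with all $G'_i$ sofic and all $H'_i$ amenable, a free ultrafilter $\omega$ on $\mathbb N$, and an embedding $\pi:G\to\prod_\omega(G'_i\times K)$ into the algebraic ultraproduct such that $\pi(G)\cap\prod_\omega(H'_i\times K)=\pi(H)$. The algebraic ultraproduct is $\prod_\omega L_i=(\prod_i L_i)/N$ with $N=\{(g_i):\{i:g_i=1\}\in\omega\}$. *)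

(* Defs.v *)
From HB Require Import structures.
From mathcomp Require Import all_boot all_fingroup.
From Stdlib Require Import Reals.
Set Implicit Arguments. Unset Strict Implicit. Unset Printing Implicit Defensive.
Local Open Scope group_scope.

Definition is_subgroup (G : groupType) (H : {pred G}) : Prop :=
  1 \in H /\ (forall x y, x \in H -> y \in H -> x * y \in H) /\
  (forall x, x \in H -> x^-1 \in H).

Definition free_ultrafilter (U : (nat -> Prop) -> Prop) : Prop :=
  ~ U (fun _ => False) /\
  (forall A B, U A -> (forall i, A i -> B i) -> U B) /\
  (forall A B, U A -> U B -> U (fun i => A i /\ B i)) /\
  (forall A, U A \/ U (fun i => ~ A i)) /\
  (forall N, U (fun i => N <= i)).

(* Normalised Hamming distance on Sym(n), as a count of moved points. *)
Definition ham_count n (s t : {perm 'I_n}) : nat := #|[pred x | s x != t x]|.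

(* Sofic groups: for every finite F and eps = 1/(k+1) there is a map
   phi : G -> Sym(n) which is eps-multiplicative on F and eps-far from
   the identity on F \ {1} (Hamming distance > 1 - eps). *)
Definition sofic (G : groupType) : Prop :=
  forall (F : seq G) (k : nat), exists n (phi : G -> {perm 'I_n}),
    0 < n /\
    (forall g h, g \in F -> h \in F ->
       ham_count (phi (g * h)) (phi g * phi h) * k.+1 < n) /\
    (forall g, g \in F -> g != 1 ->
       (n - ham_count (phi g) 1) * k.+1 < n).

Definition amenable_in (G : groupType) (H : {pred G}) : Prop :=
  exists mu : (G -> Prop) -> R,
    mu (fun x => x \in H) = 1%R /\
    (forall A, (forall x, A x -> x \in H) -> (0 <= mu A)%R) /\
    (forall A B, (forall x, A x -> x \in H) -> (forall x, B x -> x \in H) ->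
       (forall x, A x -> B x -> False) ->
       mu (fun x => A x \/ B x) = (mu A + mu B)%R) /\
    (forall h A, h \in H -> (forall x, A x -> x \in H) ->
       mu (fun x => A (h^-1 * x)) = mu A).

(* The embedding pi : Gs -> prod_omega (G'_i x K) is given by a lift to the
   full product, i.e. coordinates (phi i, psi i); equalities in the algebraic
   ultraproduct are equalities on an omega-large set of indices. *)
Definition rel_sofic_in (G : groupType) (Gs Hs : {pred G}) (K : groupType) : Prop :=
  exists (G' : nat -> groupType) (H' : forall i, {pred G' i})
         (U : (nat -> Prop) -> Prop)
         (phi : forall i, G -> G' i) (psi : nat -> G -> K),
    (forall i, sofic (G' i)) /\
    (forall i, is_subgroup (H' i)) /\
    (forall i, amenable_in (H' i)) /\
    free_ultrafilter U /\
    (forall g h, g \in Gs -> h \in Gs ->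
       U (fun i => phi i (g * h) = phi i g * phi i h /\
                   psi i (g * h) = psi i g * psi i h)) /\
    (forall g h, g \in Gs -> h \in Gs -> g <> h ->
       U (fun i => phi i g <> phi i h \/ psi i g <> psi i h)) /\
    (* pi(Gs) meets prod_omega (H'_i x K) exactly in pi(Hs) *)
    (forall g, g \in Gs ->
       (U (fun i => phi i g \in H' i) <-> exists h, h \in Hs /\
          U (fun i => phi i g = phi i h /\ psi i g = psi i h))).

Definition rel_sofic (G : groupType) (H : {pred G}) (K : groupType) : Prop :=
  rel_sofic_in [pred _ : G | true] H K.

(* Main.v *)
Require Import Defs.
From HB Require Import structures.
From mathcomp Require Import all_boot all_fingroup.
From Stdlib Require Import Classical ClassicalEpsilon.
From Stdlib Require Cantor Lia.

Unset Implicit Arguments.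
Local Open Scope group_scope.

Record RSdata (G K : groupType) (Gs Hs : {pred G}) := {
  dG : nat -> groupType;
  dH : forall i : nat, {pred (dG i)};
  dU : (nat -> Prop) -> Prop;
  dphi : forall i, G -> dG i;
  dpsi : nat -> G -> K;
  dspec :
    (forall i : nat, sofic (dG i)) /\
    (forall i : nat, is_subgroup (dH i)) /\
    (forall i : nat, amenable_in (dH i)) /\
    free_ultrafilter dU /\
    (forall g h, g \in Gs -> h \in Gs ->
       dU (fun i => dphi i (g * h) = dphi i g * dphi i h /\
                   dpsi i (g * h) = dpsi i g * dpsi i h)) /\
    (forall g h, g \in Gs -> h \in Gs -> g <> h ->
       dU (fun i => dphi i g <> dphi i h \/ dpsi i g <> dpsi i h)) /\
    (forall g, g \in Gs ->
       (dU (fun i => dphi i g \in dH i) <-> exists h, h \in Hs /\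
          dU (fun i => dphi i g = dphi i h /\ dpsi i g = dpsi i h)))
}.

Arguments dG {G K Gs Hs}.
Arguments dH {G K Gs Hs}.
Arguments dU {G K Gs Hs}.
Arguments dphi {G K Gs Hs}.
Arguments dpsi {G K Gs Hs}.
Arguments dspec {G K Gs Hs}.
Set Implicit Arguments.

Lemma rs_inh (G K : groupType) (Gs Hs : {pred G}) :
  rel_sofic_in Gs Hs K -> inhabited (RSdata G K Gs Hs).
Proof.
move=> [G' [H' [U [phi [psi P]]]]].
exact: (inhabits (@Build_RSdata G K Gs Hs G' H' U phi psi P)).
Qed.

Lemma uf_mono {U A B} : free_ultrafilter U -> U A -> (forall i, A i -> B i) -> U B.
Proof. by move=> [_ [H _]]; apply: H. Qed.

Lemma uf_true {U} {A : nat -> Prop} : free_ultrafilter U -> (forall i, A i) -> U A.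
Proof.
move=> hU hA; have := hU => [[_ [hm [_ [_ hN]]]]].
by apply: (hm _ _ (hN 0)) => i _; apply: hA.
Qed.

Lemma uf_and {U A B} : free_ultrafilter U -> U A -> U B -> U (fun i => A i /\ B i).
Proof. by move=> [_ [_ [H _]]]; apply: H. Qed.

Lemma uf_nonempty {U A} : free_ultrafilter U -> U A -> exists i, A i.
Proof.
move=> hU hA; apply: NNPP => hn.
have := hU => [[h0 _]]; apply: h0; apply: (uf_mono hU hA).
by move=> i Ai; apply: hn; exists i.
Qed.

Theorem lemma2p18 (G K : groupType) (H : {pred G}) (Gs Hs : nat -> {pred G}) :
  is_subgroup H ->
  (forall k, is_subgroup (Gs k)) ->
  (forall k, is_subgroup (Hs k)) ->
  (forall k, {subset Gs k <= Gs k.+1}) ->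
  (forall k, {subset Hs k <= Hs k.+1}) ->
  (forall g : G, exists k, g \in Gs k) ->
  (forall h : G, h \in H <-> exists k, h \in Hs k) ->
  (forall k, {subset Hs k <= Gs k}) ->
  (forall k, rel_sofic_in (Gs k) (Hs k) K) ->
  rel_sofic H K.
Proof.
move=> _ _ _ incG incH covG defH HG hrs.
have incG' : forall k k', k <= k' -> {subset Gs k <= Gs k'}.
  move=> k k' /subnK <-; elim: (k' - k) => [|n IH] x // /IH.
  by rewrite addSn; apply: incG.
have incH' : forall k k', k <= k' -> {subset Hs k <= Hs k'}.
  move=> k k' /subnK <-; elim: (k' - k) => [|n IH] x // /IH.
  by rewrite addSn; apply: incH.
pose D k := epsilon (rs_inh (hrs k)) (fun _ => True).
have spec k := dspec (D k).
have hUk : forall k, free_ultrafilter (dU (D k)).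
  by move=> k; case: (spec k) => _ [_ [_ [h _]]].
pose W := dU (D 0).
have hW : free_ultrafilter W := hUk 0.
pose unp := Cantor.of_nat.
pose V (A : nat -> Prop) := W (fun k => dU (D k) (fun i => A (Cantor.to_nat (k, i)))).
have transfer : forall Pp : nat -> nat -> Prop,
    V (fun j => Pp (unp j).1 (unp j).2) <-> W (fun k => dU (D k) (Pp k)).
  move=> Pp; rewrite /V /unp; split => h; apply: (uf_mono hW h) => k hk;
    apply: (uf_mono (hUk k) hk) => i; by rewrite Cantor.cancel_of_to.
have Wge : forall k0 (S : nat -> Prop), (forall k, k0 <= k -> S k) -> W S.
  move=> k0 S hS; have := hW => [[_ [hm [_ [_ hN]]]]].
  by apply: (hm _ _ (hN k0)).
exists (fun j => dG (D (unp j).1) (unp j).2).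
exists (fun j => dH (D (unp j).1) (unp j).2).
exists V.
exists (fun j => dphi (D (unp j).1) (unp j).2).
exists (fun j => dpsi (D (unp j).1) (unp j).2).
split; first by move=> j; case: (spec (unp j).1) => h _; apply: h.
split; first by move=> j; case: (spec (unp j).1) => _ [h _]; apply: h.
split; first by move=> j; case: (spec (unp j).1) => _ [_ [h _]]; apply: h.
split.
  split.
    move=> hV; have := hW => [[h0 _]]; apply: h0; apply: (uf_mono hW hV) => k hk.
    by case: (hUk k) => h1 _; apply: h1.
  split.
    move=> A B hA hAB; apply: (uf_mono hW hA) => k hk.
    by apply: (uf_mono (hUk k) hk) => i; apply: hAB.
  split.
    move=> A B hA hB; apply: (uf_mono hW (uf_and hW hA hB)) => k [h1 h2].
    exact: uf_and.
  split.
    move=> A; have := hW => [[_ [_ [_ [hor _]]]]].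
    case: (hor (fun k => dU (D k) (fun i => A (Cantor.to_nat (k, i))))) => h; [left|right] => //.
    apply: (uf_mono hW h) => k hk.
    by case: (hUk k) => _ [_ [_ [hor' _]]]; case: (hor' (fun i => A (Cantor.to_nat (k, i)))).
  move=> N; rewrite /V; apply: (uf_true hW) => k.
  have := hUk k => [[_ [hm [_ [_ hN]]]]].
  apply: (hm _ _ (hN N)) => i hi.
  apply: (leq_trans hi); apply/leP.
  have := Cantor.to_nat_non_decreasing k i; Lia.lia.
split.
  move=> g h _ _; case: (covG g) => kg hg; case: (covG h) => kh hh.
  apply/(transfer (fun k i => dphi (D k) i (g * h) = dphi (D k) i g * dphi (D k) i h /\
                   dpsi (D k) i (g * h) = dpsi (D k) i g * dpsi (D k) i h)).
  apply: (Wge (maxn kg kh)) => k hk; case: (spec k) => _ [_ [_ [_ [hm _]]]].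
  apply: hm; [apply: (incG' kg) => //| apply: (incG' kh) => //].
    by apply: leq_trans hk; apply: leq_maxl.
  by apply: leq_trans hk; apply: leq_maxr.
split.
  move=> g h _ _ gh; case: (covG g) => kg hg; case: (covG h) => kh hh.
  apply/(transfer (fun k i => dphi (D k) i g <> dphi (D k) i h \/ dpsi (D k) i g <> dpsi (D k) i h)).
  apply: (Wge (maxn kg kh)) => k hk; case: (spec k) => _ [_ [_ [_ [_ [hi _]]]]].
  apply: hi => //; [apply: (incG' kg) => //| apply: (incG' kh) => //].
    by apply: leq_trans hk; apply: leq_maxl.
  by apply: leq_trans hk; apply: leq_maxr.
move=> g _; case: (covG g) => kg hg.
have key : forall k, kg <= k -> (dU (D k) (fun i => dphi (D k) i g \in dH (D k) i) <-> g \in Hs k).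
  move=> k hk; have gk : g \in Gs k by apply: (incG' kg).
  case: (spec k) => _ [_ [_ [_ [_ [hi hr]]]]]; split.
    move=> /(hr g gk) [h [hh hU]].
    case: (classic (g = h)) => [->|ne] //.
    have := uf_and (hUk k) hU (hi g h gk (HG k h hh) ne).
    move=> /(uf_nonempty (hUk k)) [i [[e1 e2] [c|c]]]; by [].
  move=> gH; apply/(hr g gk); exists g; split => //; exact: uf_true.
split.
  move=> /(transfer (fun k i => dphi (D k) i g \in dH (D k) i)) hV.
  have := uf_and hW hV (Wge kg (fun k => kg <= k) (fun k h => h)).
  move=> /(uf_nonempty hW) [k0 [hk1 hk2]].
  exists g; split; first by apply/defH; exists k0; apply/(key k0 hk2).
  rewrite /V; apply: (uf_true hW) => k; apply: (uf_true (hUk k)) => i; by split.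
move=> [h [hH hV]].
move: hV => /(transfer (fun k i => dphi (D k) i g = dphi (D k) i h /\ dpsi (D k) i g = dpsi (D k) i h)) hV.
have [kh hh] : exists k, h \in Hs k by apply/defH.
have hk1 : forall k, maxn kg kh <= k -> kg <= k.
  by move=> k hk; apply: leq_trans hk; apply: leq_maxl.
have hk2 : forall k, maxn kg kh <= k -> kh <= k.
  by move=> k hk; apply: leq_trans hk; apply: leq_maxr.
have eg : g = h.
  apply: NNPP => ne.
  have := uf_and hW hV (Wge (maxn kg kh) (fun k => maxn kg kh <= k) (fun k h => h)).
  move=> /(uf_nonempty hW) [k [hk hk']].
  case: (spec k) => _ [_ [_ [_ [_ [hi _]]]]].
  have gk : g \in Gs k by apply: (incG' kg) => //; apply: hk1.
  have hk0 : h \in Gs k by apply: HG; apply: (incH' kh) => //; apply: hk2.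
  have := uf_and (hUk k) hk (hi g h gk hk0 ne).
  by move=> /(uf_nonempty (hUk k)) [i [[e1 e2] [c|c]]].
subst h.
apply/(transfer (fun k i => dphi (D k) i g \in dH (D k) i)).
apply: (Wge (maxn kg kh)) => k hk.
apply/(key k (hk1 k hk)).
by apply: (incH' kh) => //; apply: hk2.
Qed.
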